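(* For every $\epsilon>0$ there exist $M\in\mathbb N$ and $R>0$ such that for all $m\ge M$ and all $r\ge R$, $$\mathbb E\big(v_m^r\big)\le(2+\epsilon)\log r.$$
   Context: Expectation is with respect to Lebesgue measure $\lambda$ on $[0,1)$; $\log$ is natural. For $m\in\mathbb N$, $j\in\mathbb N_0$, $i\in\{0,\dots,2^{m-1}-1\}$ let $J^m_{j,i}=[2^{-j}-(i+1)2^{-(j+m)},\,2^{-j}-i2^{-(j+m)})$ (these partition $(0,1)$) and $y_{j,i}=\frac{2^{j+m+1}}{2^m-i-1}$. For $r\ge1$, $v_m^r$ is the function constant on each $J^m_{j,i}$ with value $y_{\min\{j,\lfloor\log_2r\rfloor\},i}$. *)

(* Defs.v *)
From Stdlib Require Import Reals Lra Lia.
Open Scope R_scope.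

(* floor(log_2 r), as a natural number (r >= 1, so it is >= 0). *)
Definition flog2 (r : R) : nat := Z.to_nat (Int_part (ln r / ln 2)).

Definition J_left (m j i : nat) : R :=
  / 2 ^ j - INR (i + 1) * / 2 ^ (j + m).
Definition J_right (m j i : nat) : R :=
  / 2 ^ j - INR i * / 2 ^ (j + m).

Definition J_len (m j i : nat) : R := J_right m j i - J_left m j i.

Definition y_val (m j i : nat) : R :=
  2 ^ (j + m + 1) / (2 ^ m - INR i - 1).

(* Value of v_m^r on the cell J^m_{j,i}. *)
Definition v_val (m : nat) (r : R) (j i : nat) : R :=
  y_val m (Nat.min j (flog2 r)) i.

Definition row_integral (m : nat) (r : R) (j : nat) : R :=
  sum_f_R0 (fun i => J_len m j i * v_val m r j i) (2 ^ (m - 1) - 1)%nat.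

(* E(v_m^r) = l : the Lebesgue integral over [0,1) of the nonnegative
   function v_m^r, which is constant on each cell of the countable partition
   {J^m_{j,i}} of (0,1), i.e. the sum over all cells of value * length. *)
Definition expectation_is (m : nat) (r l : R) : Prop :=
  infinite_sum (row_integral m r) l.

(* Main.v *)
Require Import Defs.
From Stdlib Require Import Reals Lra Lia ZArith.
Open Scope R_scope.

Lemma ln_le_sub1 y : 0 < y -> ln y <= y - 1.
Proof.
  intros Hy. destruct (Req_dec (ln y) 0) as [H|H].
  - rewrite H. assert (y = 1). { rewrite <- (exp_ln y Hy), H. apply exp_0. } lra.
  - pose proof (exp_ineq1 _ H). rewrite exp_ln in H0 by exact Hy. lra.
Qed.

Lemma ln2_lt1 : ln 2 < 1.
Proof.
  assert (H : (1:R) <> 0) by lra. pose proof (exp_ineq1 _ H).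
  rewrite <- (ln_exp 1). apply ln_increasing; lra.
Qed.

Lemma ln_step k : 1 < k -> / k <= ln k - ln (k - 1).
Proof.
  intros Hk. pose proof (ln_le_sub1 ((k-1)/k)) as H.
  assert (0 < (k-1)/k) by (apply Rdiv_lt_0_compat; lra).
  specialize (H H0). unfold Rdiv in H. rewrite ln_mult in H by (try lra; apply Rinv_0_lt_compat; lra).
  rewrite ln_Rinv in H by lra.
  replace ((k-1) * / k - 1) with (- / k) in H by (field; lra). lra.
Qed.

Lemma harm B n : INR n + 2 < B ->
  sum_f_R0 (fun i => / (B - INR i - 1)) n <= ln (B - 1) - ln (B - INR n - 2).
Proof.
  induction n as [|n IH]; intros H.
  - simpl. simpl in H. replace (B - 0 - 1) with (B - 1) by ring.
    replace (B - 0 - 2) with (B - 1 - 1) by ring. apply ln_step; lra.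
  - rewrite S_INR in *. change (sum_f_R0 (fun i => / (B - INR i - 1)) (S n)) with (sum_f_R0 (fun i => / (B - INR i - 1)) n + / (B - INR (S n) - 1)). rewrite S_INR.
    assert (INR n + 2 < B) by lra. specialize (IH H0).
    pose proof (ln_step (B - INR n - 2)) as Hs.
    replace (B - INR n - 2 - 1) with (B - (INR n + 1) - 2) in Hs by ring.
    replace (B - (INR n + 1) - 1) with (B - INR n - 2) by ring.
    assert (1 < B - INR n - 2) by lra. specialize (Hs H1). lra.
Qed.

Lemma nat_pow_ge k : (S k <= 2 ^ k)%nat.
Proof.
  induction k; simpl; [lia|].
  assert (1 <= 2 ^ k)%nat by (apply Nat.le_succ_l, Nat.neq_0_lt_0, Nat.pow_nonzero; lia). all: lia.
Qed.

Lemma INR_flog2 r : 1 <= r -> INR (flog2 r) <= ln r / ln 2.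
Proof.
  intros Hr. unfold flog2.
  assert (0 <= ln r / ln 2).
  { apply Rmult_le_pos. destruct (Req_dec r 1). subst; rewrite ln_1; lra.
    left; rewrite <- ln_1; apply ln_increasing; lra. left; apply Rinv_0_lt_compat; pose proof ln_lt_2; lra. }
  destruct (base_Int_part (ln r / ln 2)) as [H1 _].
  destruct (Z.lt_ge_cases (Int_part (ln r / ln 2)) 0).
  - destruct (Int_part (ln r / ln 2)) eqn:E; try lia. simpl. lra.
  - rewrite INR_IZR_INZ, Z2Nat.id by lia. lra.
Qed.

Section Row.
Variables (m : nat) (r : R).
Definition Kr := flog2 r.
Definition Sm := sum_f_R0 (fun i => / (2 ^ m - INR i - 1)) (2 ^ (m - 1) - 1).
Definition cf (j : nat) := 2 ^ (Nat.min j Kr) * 2 / 2 ^ j.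

Lemma row_eq j : (1 <= m)%nat -> row_integral m r j = Sm * cf j.
Proof.
  intros Hm. unfold row_integral, Sm. rewrite Rmult_comm, scal_sum. apply sum_eq. intros i Hi.
  destruct m as [|k]; [lia|]. replace (S k - 1)%nat with k in * by lia.
  assert (Hp : (1 <= 2 ^ k)%nat) by (apply Nat.le_succ_l, Nat.neq_0_lt_0, Nat.pow_nonzero; lia).
  assert (Hi' : INR i + 1 <= 2 ^ k).
  { rewrite <- (pow_INR 2), <- S_INR. replace (INR 2) with 2 by (simpl; ring). apply le_INR; lia. }
  assert (HD : 2 ^ S k - INR i - 1 <> 0).
  { simpl. pose proof (pow_lt 2 k). lra. }
  unfold J_len, J_right, J_left, v_val, y_val, cf, Kr. rewrite plus_INR. simpl (INR 1).
  rewrite !pow_add. field. repeat split; try exact HD; apply pow_nonzero; lra.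
Qed.

Lemma part1 n : (n <= Kr)%nat -> sum_f_R0 cf n = 2 * (INR n + 1).
Proof.
  induction n; intros H.
  - simpl. unfold cf. rewrite Nat.min_l by lia. simpl. field.
  - simpl sum_f_R0. rewrite IHn by lia. unfold cf. rewrite Nat.min_l by lia. rewrite S_INR.
    field. apply pow_nonzero; lra.
Qed.

Lemma part2 p : sum_f_R0 cf (Kr + p) = 2 * (INR Kr + 2) - 2 / 2 ^ p.
Proof.
  induction p.
  - rewrite Nat.add_0_r, part1 by lia. simpl. field.
  - rewrite Nat.add_succ_r. simpl sum_f_R0. rewrite IHp. unfold cf.
    rewrite Nat.min_r by lia. rewrite <- Nat.add_succ_r, pow_add. simpl. field.
    split; apply pow_nonzero; lra.
Qed.

Lemma cv_cf : Un_cv (fun n => sum_f_R0 cf n) (2 * (INR Kr + 2)).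
Proof.
  intros eps He.
  destruct (pow_lt_1_zero (/2)) with (y := eps / 2) as [N0 HN].
  { rewrite Rabs_pos_eq; lra. } lra.
  exists (Kr + N0)%nat. intros n Hn.
  replace n with (Kr + (n - Kr))%nat by lia. rewrite part2.
  specialize (HN (n - Kr)%nat ltac:(lia)). rewrite pow_inv in HN.
  unfold R_dist. replace (2 * (INR Kr + 2) - 2 / 2 ^ (n - Kr) - 2 * (INR Kr + 2))
    with (- (2 * / 2 ^ (n - Kr))) by (unfold Rdiv; ring).
  rewrite Rabs_Ropp, Rabs_mult, (Rabs_pos_eq 2) by lra. lra.
Qed.

Lemma exp_is : (1 <= m)%nat -> expectation_is m r (Sm * (2 * (INR Kr + 2))).
Proof.
  intros Hm eps He.
  assert (Ha : 0 < eps / (Rabs Sm + 1)).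
  { apply Rdiv_lt_0_compat; [lra|]. pose proof (Rabs_pos Sm); lra. }
  destruct (cv_cf _ Ha) as [N HN]. exists N. intros n Hn.
  specialize (HN n Hn).
  assert (sum_f_R0 (row_integral m r) n = Sm * sum_f_R0 cf n).
  { rewrite scal_sum. apply sum_eq. intros. rewrite row_eq by exact Hm. ring. }
  rewrite H. unfold R_dist in *. rewrite <- Rmult_minus_distr_l, Rabs_mult.
  set (d := Rabs (sum_f_R0 cf n - 2 * (INR Kr + 2))) in *. pose proof (Rabs_pos Sm). assert (0 <= d) by apply Rabs_pos.
  assert ((Rabs Sm + 1) * d < eps).
  { apply (Rmult_lt_compat_l (Rabs Sm + 1)) in HN; [|lra].
    replace ((Rabs Sm + 1) * (eps / (Rabs Sm + 1))) with eps in HN by (field; lra). lra. }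
  nra.
Qed.
End Row.
Theorem mainTheorem15 :
  forall eps : R, 0 < eps ->
  exists (M : nat) (R0 : R), 0 < R0 /\
    forall (m : nat) (r : R),
      (1 <= m)%nat -> (M <= m)%nat ->
      1 <= r -> R0 <= r ->
      exists E : R, expectation_is m r E /\ E <= (2 + eps) * ln r.
Proof.
  intros eps He.
  destruct (INR_unbounded (8/eps)) as [M0 HM0].
  exists (M0 + 2)%nat, (exp (16/eps)). split; [apply exp_pos|].
  intros m r Hm1 HM Hr HR.
  exists (Sm m * (2*(INR (Kr r) + 2))). split; [apply exp_is; lia|].
  destruct m as [|k]; [lia|].
  assert (Hp : (1 <= 2 ^ k)%nat) by (apply Nat.le_succ_l, Nat.neq_0_lt_0, Nat.pow_nonzero; lia).
  assert (HX : INR (S k) <= 2 ^ k).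
  { assert (E : INR (2^k) = 2^k) by (rewrite pow_INR; f_equal; simpl; ring). rewrite <- E. apply le_INR, nat_pow_ge. }
  assert (HMk : INR (M0 + 2) <= INR (S k)) by (apply le_INR; lia).
  rewrite plus_INR in HMk. simpl (INR 2) in HMk. pose proof (pos_INR M0).
  set (X := 2 ^ k) in *.
  assert (HX2 : 2 <= X) by lra.
  set (d := / (2 * X - 2)).
  assert (HS : Sm (S k) <= ln 2 + d).
  { unfold Sm. replace (S k - 1)%nat with k by lia.
    pose proof (harm (2 ^ S k) (2 ^ k - 1)) as Hh.
    rewrite minus_INR, pow_INR in Hh by exact Hp.
    replace (INR 2) with 2 in Hh by (simpl; ring). simpl (INR 1) in Hh.
    change (2 ^ S k) with (2 * 2 ^ k) in *. fold X in Hh.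
    assert (Hq1 : X - 1 + 2 < 2 * X) by lra. specialize (Hh Hq1).
    replace (2 * X - (X - 1) - 2) with (X - 1) in Hh by ring.
    assert (E1 : 2 * X - 1 = 2 * ((X - 1) * ((2 * X - 1) / (2 * X - 2)))) by (field; lra).
    assert (Hq0 : 0 < (2 * X - 1) / (2 * X - 2)) by (apply Rdiv_lt_0_compat; lra).
    rewrite E1 in Hh. rewrite ln_mult, ln_mult in Hh; try lra.
    all: try (apply Rmult_lt_0_compat; lra).
    pose proof (ln_le_sub1 _ Hq0) as Hq2.
    replace ((2 * X - 1) / (2 * X - 2) - 1) with d in Hq2 by (unfold d; field; lra).
    fold X. lra. }
  assert (Hd1 : d < eps / 8).
  { unfold d. replace (eps / 8) with (/ (8 / eps)) by (field; lra).
    apply Rinv_lt_contravar.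
    - apply Rmult_lt_0_compat. apply Rdiv_lt_0_compat; lra. lra.
    - lra. }
  assert (Hd2 : 0 < d) by (unfold d; apply Rinv_0_lt_compat; lra).
  assert (Hd3 : d * (2 * X - 2) = 1) by (unfold d; field; lra).
  pose proof (INR_flog2 r Hr) as HK. fold (Kr r) in HK. pose proof (pos_INR (Kr r)).
  assert (Hlr : 16 / eps <= ln r).
  { rewrite <- (ln_exp (16/eps)). destruct (Req_dec (exp (16/eps)) r) as [Ee|Ee]. rewrite Ee; lra. left. apply ln_increasing. apply exp_pos. lra. }
  assert (Hl16 : 16 <= eps * ln r).
  { apply (Rmult_le_compat_l eps) in Hlr; [|lra].
    replace (eps * (16 / eps)) with 16 in Hlr by (field; lra). lra. }
  pose proof ln_lt_2. pose proof ln2_lt1.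
  set (x := ln r / ln 2) in *.
  assert (Hx : x * ln 2 = ln r) by (unfold x; field; lra).
  assert (Hx2 : x <= 2 * ln r) by nra.
  set (K := INR (Kr r)) in *.
  assert (S1 : Sm (S k) * (2 * (K + 2)) <= (ln 2 + d) * (2 * (K + 2))).
  { apply Rmult_le_compat_r; lra. }
  assert (S2 : (ln 2 + d) * (2 * (K + 2)) <= (ln 2 + d) * (2 * (x + 2))).
  { apply Rmult_le_compat_l; lra. }
  assert (S3 : d * x <= eps / 8 * (2 * ln r)).
  { apply Rmult_le_compat; lra. }
  nra.
Qed.
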